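(* Let $F(X)=c_0+\cdots+c_{d-1}X^{d-1}+X^d\in\mathbb{Z}[X]$ be monic irreducible with fixed root $\xi$, $L=\mathbb{Q}(\xi)$ Galois of degree $d$ over $\mathbb{Q}$ with group $G$. Let $\mathbf{a}=(a_i)_{i\ge0}$ be a sequence of rational numbers with $a_{n+d}=-\sum_{k=0}^{d-1}c_ka_{n+k}$ for all $n\ge0$, and let $K$ be a conjugacy class of $G$ with characteristic function $\phi_K:G\to\mathbb{Q}$. Suppose $\Phi(\Psi(\mathbf{a}))=\phi_K$, where $\Psi(\mathbf{a})=\sum_{\sigma\in G}z_\sigma\otimes\sigma^{-1}\xi$ with $[z_\sigma]_{\sigma\in G}=P^{-1}[a_0,\dots,a_{d-1}]^t$, $P=[\sigma^{-1}(\xi^{i-1})]_{1\le i\le d,\sigma\in G}$, and $\Phi(\gamma\otimes\alpha)(\tau)=\gamma\cdot\tau(\alpha)$. Then for all but finitely many primes $p$, $a_p$ is $p$-integral and $a_p\equiv\phi_K(\mathrm{Frob}_p)\pmod p$.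
   Context: Matrices indexed by $G$ use a fixed total order on $G$. For a prime $p$ unramified in $L$, $\mathrm{Frob}_p$ is the conjugacy class of Frobenius automorphisms of primes above $p$, and $\phi_K(\mathrm{Frob}_p)$ is $1$ if this class is $K$ and $0$ otherwise. *)

(* Defs.v *)
From HB Require Import structures.
From mathcomp Require Import all_boot all_order all_algebra all_fingroup all_field.
From mathcomp Require Import boolp.
Set Implicit Arguments. Unset Strict Implicit. Unset Printing Implicit Defensive.
Import GRing.Theory Num.Theory.
Local Open Scope ring_scope.

Definition alg_integral (L : fieldExtType rat) (x : L) : Prop :=
  exists q : {poly int}, q \is monic /\ root (map_poly intr q) x.

(* sigma is a Frobenius element at some prime P of O_L above p:
   psi restricted to O_L is a ring morphism O_L -> k (k a finite field of
   characteristic p; its kernel is the prime P above p), and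
   sigma(x) = x^p mod P for all x in O_L. *)
Definition is_frob (L : splittingFieldType rat) (p : nat) (s : gal_of {:L}) : Prop :=
  exists (k : finFieldType) (psi : L -> k),
    [/\ p \in [pchar k],
        psi 1 = 1,
        (forall x y, alg_integral x -> alg_integral y -> psi (x + y) = psi x + psi y),
        (forall x y, alg_integral x -> alg_integral y -> psi (x * y) = psi x * psi y)
      & (forall x, alg_integral x -> psi (s x) = psi x ^+ p)].

Definition frob_set (L : splittingFieldType rat) (p : nat) : {set gal_of {:L}} :=
  [set s | `[< is_frob p s >]].

Definition p_integral (p : nat) (q : rat) : bool := ~~ ((p%:Z %| denq q)%Z).
Definition rat_cong_mod (p : nat) (q r : rat) : bool := ((p%:Z %| numq (q - r))%Z).

(* Main.v *)
Require Import Defs.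
From HB Require Import structures.
From mathcomp Require Import all_boot all_order all_algebra all_fingroup all_field.
From mathcomp Require Import boolp.
From mathcomp Require Import ring.
Import GRing.Theory Num.Theory.
Local Open Scope ring_scope.
From mathcomp Require Import algC algnum.
Require Import Defs.
Section A.
Variable L : splittingFieldType rat.
Implicit Types x y : L.
Lemma intgE x : alg_integral x <-> integralOver (intr : int -> L) x.
Proof. split; [case=> q [? ?]; exists q | case=> q ? ?; exists q]; by []. Qed.
Lemma intg_add x y : alg_integral x -> alg_integral y -> alg_integral (x + y).
Proof. move=> /intgE hx /intgE hy; apply/intgE. exact: integral_add. Qed.
Lemma intg_mul x y : alg_integral x -> alg_integral y -> alg_integral (x * y).
Proof. move=> /intgE hx /intgE hy; apply/intgE. exact: integral_mul. Qed.
Lemma intg_opp x : alg_integral x -> alg_integral (- x).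
Proof. move=> /intgE hx; apply/intgE. exact: integral_opp. Qed.
Lemma intg_sub x y : alg_integral x -> alg_integral y -> alg_integral (x - y).
Proof. by move=> hx hy; apply: intg_add => //; apply: intg_opp. Qed.
Lemma intg_int (n : int) : alg_integral (n%:~R : L).
Proof. apply/intgE. exact: (integral_id (intr : int -> L)). Qed.
Lemma intg_nat (n : nat) : alg_integral (n%:R : L).
Proof. exact: (intg_int n). Qed.
Lemma intg0 : alg_integral (0 : L). Proof. exact: (intg_nat 0). Qed.
Lemma intg1 : alg_integral (1 : L). Proof. exact: (intg_nat 1). Qed.
Lemma intg_exp x n : alg_integral x -> alg_integral (x ^+ n).
Proof. by move=> hx; elim: n => [|n IH]; [rewrite expr0; exact: intg1|rewrite exprS; apply: intg_mul]. Qed.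
Lemma intg_sum (I : Type) (r : seq I) (P : pred I) (f : I -> L) :
  (forall i, P i -> alg_integral (f i)) -> alg_integral (\sum_(i <- r | P i) f i).
Proof. move=> h; apply: (big_ind (@alg_integral L)) => //; [exact: intg0|exact: intg_add]. Qed.
Lemma intg_prod (I : Type) (r : seq I) (P : pred I) (f : I -> L) :
  (forall i, P i -> alg_integral (f i)) -> alg_integral (\prod_(i <- r | P i) f i).
Proof. move=> h; apply: (big_ind (@alg_integral L)) => //; [exact: intg1|exact: intg_mul]. Qed.
Lemma intg_gal (s : gal_of {:L}) x : alg_integral x -> alg_integral (s x).
Proof.
case=> q [mq rq]; exists q; split=> //.
have -> : map_poly (intr : int -> L) q = map_poly s (map_poly intr q).
  by rewrite -map_poly_comp; apply: eq_map_poly => n /=; rewrite rmorph_int.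
by rewrite rmorph_root.
Qed.
Lemma intg_rat (r : rat) : alg_integral (r%:A : L) -> exists n : int, r = n%:~R.
Proof.
case=> q [mq rq].
have rq' : root (map_poly (intr : int -> rat) q) r.
  have : root (map_poly (in_alg L) (map_poly (intr : int -> rat) q)) (in_alg L r).
    rewrite -map_poly_comp.
    have -> : map_poly (in_alg L \o intr) q = map_poly intr q.
      by apply: eq_map_poly => n; exact: (rmorph_int (in_alg L)).
    by [].
  by rewrite fmorph_root.
have : ratr r \in (Aint : {pred algC}).
  apply: (@root_monic_Aint (map_poly (intr : int -> algC) q)).
  - have -> : map_poly (intr : int -> algC) q = map_poly ratr (map_poly (intr : int -> rat) q).
      by rewrite -map_poly_comp; apply: eq_map_poly => n /=; rewrite rmorph_int.
    by rewrite fmorph_root.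
  - exact: monic_map mq.
  - by apply/polyOverP => i; rewrite coef_map /= rpred_int.
move/(Cint_rat_Aint (Crat_rat r)) => /intrP [n hn].
by exists n; apply: (fmorph_inj (ratr : {rmorphism rat -> algC})); rewrite /= hn ratr_int.
Qed.
End A.
Arguments intg_add {L x y}.
Arguments intg_mul {L x y}.
Arguments intg_opp {L x}.
Arguments intg_sub {L x y}.
Arguments intg_exp {L x n}.
Arguments intg_gal {L s x}.
Arguments intg_rat {L r}.
Definition psi_hom (L : splittingFieldType rat) (k : fieldType) (psi : L -> k) :=
  [/\ psi 1 = 1,
    (forall x y, alg_integral x -> alg_integral y -> psi (x + y) = psi x + psi y) &
    (forall x y, alg_integral x -> alg_integral y -> psi (x * y) = psi x * psi y)].

Arguments psi_hom {L k}.

Section Psi.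
Variable L : splittingFieldType rat.
Variable k : fieldType.
Variable psi : L -> k.
Hypothesis hpsi : psi_hom psi.
Let psi1 : psi 1 = 1. Proof. by case: hpsi. Qed.
Let psiD : forall x y, alg_integral x -> alg_integral y -> psi (x + y) = psi x + psi y.
Proof. by case: hpsi. Qed.
Let psiM : forall x y, alg_integral x -> alg_integral y -> psi (x * y) = psi x * psi y.
Proof. by case: hpsi. Qed.

Lemma psi0 : psi 0 = 0.
Proof.
have := psiD 0 0 (intg0 L) (intg0 L); rewrite addr0 => e.
by have := congr1 (fun y => y - psi 0) e; rewrite subrr addrK => <-.
Qed.

Lemma psiN x : alg_integral x -> psi (- x) = - psi x.
Proof.
move=> hx; have := psiD _ _ hx (intg_opp hx); rewrite subrr psi0 => /eqP.
by rewrite eq_sym addrC addr_eq0 => /eqP.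
Qed.

Lemma psiB x y : alg_integral x -> alg_integral y -> psi (x - y) = psi x - psi y.
Proof. by move=> hx hy; rewrite psiD ?psiN //; exact: intg_opp. Qed.

Lemma psi_nat (n : nat) : psi n%:R = n%:R.
Proof.
elim: n => [|n IH]; first by rewrite psi0.
by rewrite -addn1 !natrD (psiD _ _ (intg_nat L n) (intg1 L)) IH psi1.
Qed.

Lemma psi_int (n : int) : psi n%:~R = n%:~R.
Proof.
case: n => n; first exact: psi_nat.
by rewrite NegzE !rmorphN (psiN _ (intg_nat L n.+1)) psi_nat.
Qed.

Lemma psi_sum (I : Type) (r : seq I) (P : pred I) (f : I -> L) :
  (forall i, P i -> alg_integral (f i)) ->
  psi (\sum_(i <- r | P i) f i) = \sum_(i <- r | P i) psi (f i).
Proof.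
move=> h.
have : alg_integral (\sum_(i <- r | P i) f i) /\ psi (\sum_(i <- r | P i) f i) = \sum_(i <- r | P i) psi (f i).
  apply: (big_ind2 (fun x y => alg_integral x /\ psi x = y)).
  - by split; [exact: intg0 | exact: psi0].
  - by move=> x1 x2 y1 y2 [h1 <-] [h2 <-]; split; [exact: intg_add | exact: psiD].
  - by move=> i Pi; split=> //; apply: h.
by case.
Qed.

Lemma psi_prod (I : Type) (r : seq I) (P : pred I) (f : I -> L) :
  (forall i, P i -> alg_integral (f i)) ->
  psi (\prod_(i <- r | P i) f i) = \prod_(i <- r | P i) psi (f i).
Proof.
move=> h.
have : alg_integral (\prod_(i <- r | P i) f i) /\ psi (\prod_(i <- r | P i) f i) = \prod_(i <- r | P i) psi (f i).
  apply: (big_ind2 (fun x y => alg_integral x /\ psi x = y)).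
  - by split; [exact: intg1 | exact: psi1].
  - by move=> x1 x2 y1 y2 [h1 <-] [h2 <-]; split; [exact: intg_mul | exact: psiM].
  - by move=> i Pi; split=> //; apply: h.
by case.
Qed.

Lemma psi_exp x n : alg_integral x -> psi (x ^+ n) = psi x ^+ n.
Proof.
move=> hx; elim: n => [|n IH]; first by rewrite !expr0 psi1.
by rewrite !exprS psiM ?IH //; exact: intg_exp.
Qed.

Lemma psi_horner (H : {poly int}) y : alg_integral y ->
  psi (map_poly (intr : int -> L) H).[y] = (map_poly (intr : int -> k) H).[psi y].
Proof.
move=> hy; elim/poly_ind: H => [|H c IH].
  by rewrite !rmorph0 !horner0 psi0.
have hH : alg_integral (map_poly (intr : int -> L) H).[y].
  case: (hy) => q [mq rq]; apply/intgE; apply: integral_horner; last by apply/intgE.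
  by move=> v /(nthP 0) [i _ <-]; rewrite coef_map /=; apply/intgE; exact: intg_int.
rewrite !rmorphD !rmorphM /= !map_polyX !map_polyC /= !hornerE.
rewrite psiD ?psiM ?IH ?psi_int //; [exact: intg_mul | exact: intg_int].
Qed.

End Psi.
Arguments psi0 {L k psi}.
Arguments psiN {L k psi}.
Arguments psiB {L k psi}.
Arguments psi_nat {L k psi}.
Arguments psi_int {L k psi}.
Arguments psi_sum {L k psi}.
Arguments psi_prod {L k psi}.
Arguments psi_exp {L k psi}.
Arguments psi_horner {L k psi}.

Lemma int_dvd_pchar (k : fieldType) (p : nat) (n : int) : p \in [pchar k] ->
  (n%:~R : k) = 0 -> (p%:Z %| n)%Z.
Proof.
move=> hp; rewrite dvdzE /= (dvdn_pcharf hp).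
case: n => n /= e; first by rewrite -e.
by move: e; rewrite NegzE rmorphN => /eqP; rewrite oppr_eq0.
Qed.
Lemma dvdz_primeM (p : nat) (x y : int) : prime p ->
  (p%:Z %| x * y)%Z = (p%:Z %| x)%Z || (p%:Z %| y)%Z.
Proof. by move=> pp; rewrite !dvdzE abszM Euclid_dvdM. Qed.
Lemma num_dvd (p : nat) (c : rat) (D u : int) : prime p -> ~~ (p%:Z %| D)%Z ->
  c * D%:~R = u%:~R -> (p%:Z %| u)%Z -> (p%:Z %| numq c)%Z.
Proof.
move=> pp nD hc hu.
have e : numq c * D = u * denq c.
  apply: (@intr_inj rat); rewrite !intrM numqE -hc; by rewrite mulrAC.
have : (p%:Z %| numq c * D)%Z by rewrite e dvdz_mulr.
by rewrite dvdz_primeM // (negbTE nD) orbF.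
Qed.
Lemma cong_final (p : nat) (a : rat) (m D : int) (b : nat) : prime p ->
  ~~ (p%:Z %| D)%Z -> a * D%:~R = m%:~R -> (p%:Z %| m - D * b%:Z)%Z ->
  p_integral p a && rat_cong_mod p a b%:R.
Proof.
move=> pp nD ha hm; apply/andP; split.
  apply/negP => hd.
  have e : numq a * D = m * denq a.
    apply: (@intr_inj rat); rewrite !intrM numqE -ha; by rewrite mulrAC.
  have : (p%:Z %| numq a * D)%Z by rewrite e dvdz_mull.
  rewrite dvdz_primeM // (negbTE nD) orbF => hn.
  have := coprime_num_den a; rewrite /coprime => /eqP g.
  have : (p %| gcdn `|numq a| `|denq a|)%N.
    rewrite dvdn_gcd; apply/andP; split; first by move: hn; rewrite dvdzE.
    by move: hd; rewrite dvdzE.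
  by rewrite g dvdn1 => /eqP p1; move: pp; rewrite p1.
rewrite /rat_cong_mod; apply: (@num_dvd p _ D (m - D * b%:Z) pp nD)=> //.
rewrite mulrBl ha rmorphB rmorphM /=. by rewrite mulrC.
Qed.
Lemma frob_conj (L : splittingFieldType rat) (p : nat) (s t : gal_of {:L}) :
  is_frob p s -> is_frob p (s ^ t)%g.
Proof.
move=> [k [psi [pch h1 hD hM hF]]].
have tt b : (t^-1)%g (t b) = b by rewrite -galM ?memvf // mulgV gal_id.
exists k, (fun x => psi ((t^-1)%g x)); split => //.
- by rewrite rmorph1.
- by move=> x y hx hy; rewrite rmorphD hD //; apply: intg_gal.
- by move=> x y hx hy; rewrite rmorphM hM //; apply: intg_gal.
- move=> x hx; rewrite conjgE !galM ?memvf // tt hF //; exact: intg_gal.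
Qed.
Lemma memG (L : splittingFieldType rat) (t : gal_of {:L}) : t \in 'Gal({:L}/1%VS)%g.
Proof. rewrite gal_kHom ?sub1v // k1HomE. apply/ahom_inP; split. move=> x y _ _; exact: rmorphM. exact: rmorph1. Qed.

Lemma intrL_inj (L : fieldExtType rat) : injective (intr : int -> L).
Proof.
move=> m n e; apply: (@intr_inj rat); apply: (fmorph_inj (in_alg L)).
by rewrite !rmorph_int.
Qed.

Section Main.
Variable L : splittingFieldType rat.
Variable F : {poly int}.
Variable xi : L.
Hypothesis mF : F \is monic.
Hypothesis rootF : root (map_poly intr F) xi.
Hypothesis genF : <<1%VS; xi>>%VS = fullv.
Hypothesis galF : galois 1%VS {:L}.
Hypothesis dimF : \dim {:L} = (size F).-1.
Local Notation d := (size F).-1.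
Local Notation G := 'Gal({:L} / 1%VS)%g.
Local Notation Fm := (map_poly (intr : int -> L) F).

Lemma adj_deg : adjoin_degree 1 xi = d.
Proof. by rewrite adjoin_degreeE genF dimv1 divn1 dimF. Qed.

Lemma sizeF : size F = d.+1.
Proof. by rewrite prednK // lt0n size_poly_eq0 monic_neq0. Qed.

Lemma size_Fm : size Fm = size F.
Proof. by apply: size_map_poly_id0; rewrite (monicP mF) rmorph1 oner_neq0. Qed.

Lemma polyOver_int (R : {poly int}) : map_poly (intr : int -> L) R \is a polyOver 1%VS.
Proof. by apply/polyOverP => i; rewrite coef_map /= rpred_int. Qed.

Lemma minP : minPoly 1 xi = Fm.
Proof.
have dv := minPoly_dvdp (polyOver_int F) rootF.
apply/eqP; rewrite -eqp_monic ?monic_minPoly //; last exact: monic_map mF.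
by rewrite -dvdp_size_eqp // size_minPoly adj_deg size_Fm sizeF.
Qed.

Lemma cardG : #|G| = d.
Proof. by rewrite -(galois_dim galF) dimv1 divn1 dimF. Qed.

Lemma poly_zero (R : {poly int}) : (size R <= d)%N ->
  (map_poly (intr : int -> L) R).[xi] = 0 -> R = 0.
Proof.
move=> sR hR; have dv := minPoly_dvdp (polyOver_int R) (introT rootP hR).
have [/eqP R0|nR0] := eqVneq (map_poly (intr : int -> L) R) 0.
  by apply/eqP; rewrite -size_poly_eq0 -(size_map_inj_poly (@intrL_inj L)) ?rmorph0 // size_poly_eq0.
have := dvdp_leq nR0 dv; rewrite size_minPoly adj_deg.
rewrite (size_map_inj_poly (@intrL_inj L)) ?rmorph0 // => h.
by have := leq_trans h sR; rewrite ltnn.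
Qed.

Lemma divF (Q : {poly int}) : (map_poly (intr : int -> L) Q).[xi] = 0 ->
  exists q, Q = q * F.
Proof.
move=> hQ; exists (Q %/ F).
have e := Pdiv.IdomainMonic.divp_eq mF Q.
have R0 : Q %% F = 0.
  apply: poly_zero.
    by rewrite -ltnS -sizeF; apply: ltn_modpN0; rewrite monic_neq0.
  move: hQ; rewrite {1}e rmorphD rmorphM /= hornerD hornerM.
  by rewrite (rootP rootF) mulr0 add0r.
by rewrite {1}e R0 addr0.
Qed.

Definition rr (j : 'I_#|G|) : L := ((enum_val j)^-1)%g xi.
Local Notation VP := (Vandermonde #|G| (\row_j rr j)).

Lemma gal_xi_eq (s t : gal_of {:L}) : s xi = t xi -> s = t.
Proof.
move=> e; apply/eqP/gal_eqP => v _.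
have vE : v \in <<1%VS; xi>>%VS by rewrite genF memvf.
rewrite -(Fadjoin_poly_eq vE).
have hO : Fadjoin_poly 1 xi v \is a polyOver 1%VS := Fadjoin_polyOver _ _ _.
by rewrite -!horner_map /= !(fixedPoly_gal (sub1v _) (memG _ _) hO) e.
Qed.

Lemma rr_inj : injective rr.
Proof. by move=> j k /gal_xi_eq /invg_inj /enum_val_inj. Qed.

Lemma P_vdm : (\matrix_(i < #|G|, j < #|G|) ((enum_val j)^-1)%g (xi ^+ i)) = VP.
Proof. by apply/matrixP => i j; rewrite !mxE rmorphXn. Qed.

Lemma detP_neq0 : \det VP != 0.
Proof.
rewrite det_Vandermonde; apply/prodf_neq0 => i _; apply/prodf_neq0 => j lij.
rewrite !mxE subr_eq0; apply/eqP => /rr_inj e.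
by move: lij; rewrite e ltnn.
Qed.

Lemma VP_unit : VP \in unitmx.
Proof. by rewrite unitmxE unitfE detP_neq0. Qed.

Lemma xi_intg : alg_integral xi.
Proof. by exists F. Qed.

Lemma rr_intg j : alg_integral (rr j).
Proof. exact/intg_gal/xi_intg. Qed.

Lemma gal_root (s : gal_of {:L}) : Fm.[s xi] = 0.
Proof.
have -> : Fm = map_poly s Fm.
  by rewrite -map_poly_comp; apply: eq_map_poly => m /=; rewrite rmorph_int.
by rewrite horner_map (rootP rootF) rmorph0.
Qed.

Lemma rr_root j : Fm.[rr j] = 0.
Proof. exact: gal_root. Qed.

Lemma root_exp (y : L) m : Fm.[y] = 0 ->
  y ^+ (m + d) = - \sum_(k < d) (F`_k)%:~R * y ^+ (m + k).
Proof.
move=> hy; have := hy.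
rewrite (horner_coef_wide _ (_ : size Fm <= d.+1)%N); last by rewrite size_Fm sizeF.
rewrite big_ord_recr /= coef_map /=.
have -> : F`_d = 1 by move/monicP: mF; rewrite /lead_coef sizeF.
rewrite rmorph1 mul1r => /eqP; rewrite addrC addr_eq0 => /eqP e.
rewrite exprD e mulrN mulr_sumr; congr (- _); apply: eq_bigr => k _.
by rewrite coef_map /= exprD mulrCA.
Qed.

Lemma a_repr (a : nat -> rat) :
  (forall n, a (n + d)%N = - \sum_(k < d) (F`_k)%:~R * a (n + k)%N) ->
  forall n, (a n)%:A = \sum_j (invmx VP *m \col_(i < #|G|) (a i)%:A) j 0 * rr j ^+ n.
Proof.
move=> rec; elim/ltn_ind => n IH.
case: (ltnP n d) => hn.
  have hn' : (n < #|G|)%N by rewrite cardG.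
  have e := mulKVmx VP_unit (\col_(i < #|G|) (a i)%:A).
  move/colP: e => /(_ (Ordinal hn')).
  rewrite !mxE /= => <-; apply: eq_bigr => j _; rewrite !mxE mulrC.
  by [].
rewrite -(subnK hn) rec scaleNr scaler_suml.
under eq_bigr => k _.
  rewrite -scalerA IH; last by rewrite -[X in (_ < X)%N](subnK hn) ltn_add2l.
  rewrite scaler_int -mulrzl.
  over.
under [RHS]eq_bigr => j _ do rewrite (root_exp _ _ (rr_root j)) mulrN mulr_sumr.
rewrite sumrN exchange_big /=; congr (- _); apply: eq_bigr => k _.
by rewrite mulr_sumr; apply: eq_bigr => j _; rewrite mulrCA.
Qed.
Lemma det_intg (m : nat) (A : 'M[L]_m) :
  (forall i j, alg_integral (A i j)) -> alg_integral (\det A).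
Proof.
move=> hA; rewrite /determinant; apply: intg_sum => s _.
apply: intg_mul; first by apply: intg_exp; apply: intg_opp; apply: intg1.
by apply: intg_prod => i _; apply: hA.
Qed.

Lemma adj_intg (m : nat) (A : 'M[L]_m) :
  (forall i j, alg_integral (A i j)) -> forall i j, alg_integral (\adj A i j).
Proof.
move=> hA i j; rewrite mxE /cofactor; apply: intg_mul.
  by apply: intg_exp; apply: intg_opp; apply: intg1.
by apply: det_intg => k l; rewrite !mxE; apply: hA.
Qed.

Lemma VP_intg i j : alg_integral (VP i j).
Proof. by rewrite !mxE; apply/intg_exp/rr_intg. Qed.

Lemma one_intg (v : L) : v \in 1%VS -> alg_integral v -> exists m : int, v = m%:~R.
Proof.
move=> /vlineP [c ->] hv; have [m hm] := intg_rat hv.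
by exists m; rewrite hm -in_algE rmorph_int.
Qed.

Definition Nn : L := \prod_(t : gal_of {:L}) t (\det VP).

Lemma Nn_fixed (s : gal_of {:L}) : s Nn = Nn.
Proof.
have e : forall t : gal_of {:L}, s (t (\det VP)) = (t * s)%g (\det VP).
  by move=> t; rewrite galM ?memvf.
rewrite /Nn rmorph_prod; apply: etrans (eq_bigr _ (fun t _ => e t)) _.
by symmetry; apply: (reindex_inj (mulIg s)).
Qed.

Lemma Nn_in1 : Nn \in 1%VS.
Proof.
have fE : fixedField G = 1%VS := elimT galois_fixedField galF.
rewrite -fE; apply/fixedFieldP; first exact: memvf.
by move=> x _; apply: Nn_fixed.
Qed.

Lemma delta_intg : alg_integral (\det VP).
Proof. by apply: det_intg => i j; apply: VP_intg. Qed.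

Lemma Nn_intg : alg_integral Nn.
Proof. by apply: intg_prod => t _; apply: intg_gal; apply: delta_intg. Qed.

Lemma Nn_neq0 : Nn != 0.
Proof. by apply/prodf_neq0 => t _; rewrite fmorph_eq0 detP_neq0. Qed.

Lemma Nn_split : exists2 w, alg_integral w & Nn = \det VP * w.
Proof.
exists (\prod_(t : gal_of {:L} | t != 1%g) t (\det VP)).
  by apply: intg_prod => t _; apply: intg_gal; apply: delta_intg.
by rewrite /Nn (bigD1 1%g) //= gal_id.
Qed.
Lemma coords (x : L) : alg_integral x ->
  exists H : {poly int}, (map_poly (intr : int -> L) H).[xi] = Nn * x.
Proof.
move=> hx.
have xE : x \in <<1%VS; xi>>%VS by rewrite genF memvf.
have hO : Fadjoin_poly 1 xi x \is a polyOver 1%VS := Fadjoin_polyOver _ _ _.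
have hx' : (Fadjoin_poly 1 xi x).[xi] = x := Fadjoin_poly_eq xE.
have sh : (size (Fadjoin_poly 1 xi x) <= #|G|)%N by rewrite cardG -adj_deg size_Fadjoin_poly.
move: hO hx' sh; set h := Fadjoin_poly 1 xi x => hO hx' sh.
pose c : 'rV[L]_#|G| := \row_i h`_i.
have cP j : (c *m VP) 0 j = ((enum_val j)^-1)%g x.
  rewrite !mxE -hx' -horner_map (fixedPoly_gal (sub1v _) (memG _ _) hO) (horner_coef_wide _ sh).
  by apply: eq_bigr => i _; rewrite !mxE.
have key i : alg_integral (\det VP * h`_i).
  have cpos : (i < #|G|)%N \/ (#|G| <= i)%N by case: (ltnP i #|G|); [left|right].
  case: cpos => hi; last first.
    by rewrite nth_default ?mulr0; [exact: intg0 | exact: leq_trans sh hi].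
  have : (c *m VP *m \adj VP) 0 (Ordinal hi) = \det VP * h`_i.
    by rewrite -mulmxA mul_mx_adj mul_mx_scalar !mxE mulrC.
  move <-; rewrite mxE; apply: intg_sum => j _; apply: intg_mul.
    by rewrite cP; apply: intg_gal.
  by apply: adj_intg; apply: VP_intg.
have hint i : exists m : int, Nn * h`_i = m%:~R.
  apply: one_intg; first by apply: rpredM; [exact: Nn_in1 | exact: (polyOverP hO i)].
  have [w hw ->] := Nn_split.
  by rewrite mulrAC mulrC; apply: intg_mul.
pose m i := projT1 (constructive_indefinite_description (hint i)).
have hm i : Nn * h`_i = (m i)%:~R := projT2 (constructive_indefinite_description (hint i)).
exists (\poly_(i < #|G|) m i).
have eH : map_poly (intr : int -> L) (\poly_(i < #|G|) m i) = \poly_(i < #|G|) (m i)%:~R.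
  by apply/polyP => i; rewrite coef_map !coef_poly; case: ifP; rewrite ?rmorph0.
rewrite eH (horner_coef_wide _ (size_poly _ _)) -hx' (horner_coef_wide _ sh) mulr_sumr.
by apply: eq_bigr => i _; rewrite coef_poly ltn_ord -hm mulrA.
Qed.

Definition nN : int := projT1 (constructive_indefinite_description (@one_intg Nn Nn_in1 Nn_intg)).
Lemma nNE : Nn = nN%:~R.
Proof. exact: (projT2 (constructive_indefinite_description (@one_intg Nn Nn_in1 Nn_intg))). Qed.

Section Construct.
Variable k : finFieldType.
Variable p : nat.
Variable w : k.
Hypothesis pch : p \in [pchar k].
Hypothesis Fw : (map_poly (intr : int -> k) F).[w] = 0.
Hypothesis nN0 : (nN%:~R : k) != 0.

Definition psiC (x : L) : k :=
  match pselect (exists H : {poly int}, (map_poly (intr : int -> L) H).[xi] = Nn * x) with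
  | left e => (map_poly (intr : int -> k) (projT1 (constructive_indefinite_description e))).[w] / nN%:~R
  | right _ => 0
  end.

Lemma psiCE x (H : {poly int}) (M : int) : alg_integral x ->
  (map_poly (intr : int -> L) H).[xi] = M%:~R * x -> (M%:~R : k) != 0 ->
  psiC x = (map_poly (intr : int -> k) H).[w] / M%:~R.
Proof.
move=> hx eH hM; rewrite /psiC; case: pselect => [e | ne]; last first.
  by exfalso; apply: ne; apply: coords.
move: (projT2 (constructive_indefinite_description e)).
set H0 := projT1 _ => eH0.
have [q eq] : exists q, M%:P * H0 - nN%:P * H = q * F.
  apply: divF; rewrite rmorphB !rmorphM /= !map_polyC /= hornerD hornerN !hornerM !hornerC.
  by rewrite eH0 eH nNE mulrCA subrr.
have := congr1 (fun Q => (map_poly (intr : int -> k) Q).[w]) eq.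
rewrite rmorphB !rmorphM /= !map_polyC /= hornerD hornerN !hornerM !hornerC Fw mulr0.
move/eqP; rewrite subr_eq0 => /eqP e2.
apply/eqP; rewrite eqr_div //; apply/eqP.
by rewrite mulrC e2 mulrC.
Qed.

Lemma psiC_hom : psi_hom psiC.
Proof.
split.
- have i1 : (1%:~R : k) = 1 by [].
  have i1' : (1%:~R : L) = 1 by [].
  rewrite (@psiCE 1 1 1); first by rewrite rmorph1 hornerC i1 divr1.
  + exact: intg1.
  + by rewrite rmorph1 hornerC i1' mulr1.
  + by rewrite i1 oner_neq0.
- move=> x y hx hy.
  have [Hx ex] := coords _ hx; have [Hy ey] := coords _ hy.
  have e1 : psiC x = (map_poly intr Hx).[w] / nN%:~R.
    by apply: psiCE => //; rewrite -nNE.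
  have e2 : psiC y = (map_poly intr Hy).[w] / nN%:~R.
    by apply: psiCE => //; rewrite -nNE.
  have e3 : psiC (x + y) = (map_poly intr (Hx + Hy)).[w] / nN%:~R.
    apply: psiCE => //; first exact: intg_add.
    by rewrite rmorphD hornerD ex ey -nNE mulrDr.
  by rewrite e1 e2 e3 rmorphD hornerD mulrDl.
- move=> x y hx hy.
  have [Hx ex] := coords _ hx; have [Hy ey] := coords _ hy.
  have e1 : psiC x = (map_poly intr Hx).[w] / nN%:~R.
    by apply: psiCE => //; rewrite -nNE.
  have e2 : psiC y = (map_poly intr Hy).[w] / nN%:~R.
    by apply: psiCE => //; rewrite -nNE.
  have e3 : psiC (x * y) = (map_poly intr (Hx * Hy)).[w] / (nN * nN)%:~R.
    apply: psiCE => //; first exact: intg_mul.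
      by rewrite rmorphM hornerM ex ey intrM -nNE; ring.
    by rewrite intrM mulf_neq0.
  by rewrite e1 e2 e3 rmorphM hornerM intrM mulf_div.
Qed.

Lemma psiC_xi : psiC xi = w.
Proof.
have i1 : (1%:~R : k) = 1 by [].
have i1' : (1%:~R : L) = 1 by [].
rewrite (@psiCE xi 'X 1); first by rewrite map_polyX hornerX i1 divr1.
- exact: xi_intg.
- by rewrite map_polyX hornerX i1' mul1r.
- by rewrite i1 oner_neq0.
Qed.

Lemma frob_horner (H : {poly int}) (y : k) :
  (map_poly (intr : int -> k) H).[y ^+ p] = (map_poly (intr : int -> k) H).[y] ^+ p.
Proof.
rewrite -!(pFrobenius_autE pch) -horner_map /=; congr (_.[_]).
rewrite -map_poly_comp; apply: eq_map_poly => n /=.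
by rewrite pFrobenius_aut_int.
Qed.

Lemma psiC_frob : exists s : gal_of {:L}, forall x, alg_integral x -> psiC (s x) = psiC x ^+ p.
Proof.
have hp := psiC_hom.
have [r [rG _ er]] : exists r : seq (gal_of {:L}),
   [/\ r \subset G, uniq [seq t xi | t : gal_of {:L} <- r] &
     minPoly 1 xi = \prod_(b <- [seq t xi | t : gal_of {:L} <- r]) ('X - b%:P)].
  by apply: (elimT (galois_factors (sub1v _)) galF); apply: memvf.
have intgp : alg_integral (xi ^+ p) by apply: intg_exp; exact: xi_intg.
have h0 : psiC (Fm.[xi ^+ p]) = 0.
  rewrite (psi_horner hp) // (psi_exp hp) ?psiC_xi; last exact: xi_intg.
  have pp : prime p := pcharf_prime pch.
  by rewrite frob_horner Fw expr0n /= eqn0Ngt prime_gt0.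
have iw : forall t : gal_of {:L}, alg_integral (xi ^+ p - t xi).
  by move=> t; apply: intg_sub => //; apply: intg_gal; exact: xi_intg.
rewrite -minP er horner_prod big_map (psi_prod hp) in h0; last by move=> t _; rewrite hornerXsubC.
have : \prod_(t <- r) (w ^+ p - psiC (t xi)) == 0.
  rewrite -(eqP (introT eqP h0)); apply/eqP; apply: eq_bigr => t _.
  rewrite hornerXsubC (psiB hp) // ?(psi_exp hp) ?psiC_xi //; first exact: xi_intg.
  by apply: intg_gal; exact: xi_intg.
rewrite prodf_seq_eq0 => /hasP [t _ /=].
rewrite subr_eq0 => /eqP ht.
exists t => x hx.
have [Hx ex] := coords _ hx.
have es : (map_poly (intr : int -> L) Hx).[t xi] = nN%:~R * t x.
  have := congr1 t ex; rewrite nNE rmorphM rmorph_int -horner_map /= => <-.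
  congr (_.[_]); rewrite -map_poly_comp; apply: eq_map_poly => n /=.
  by rewrite rmorph_int.
have A : psiC ((map_poly (intr : int -> L) Hx).[t xi]) = (map_poly (intr : int -> k) Hx).[w ^+ p].
  by rewrite (psi_horner hp) -?ht //; apply: intg_gal; exact: xi_intg.
have B : psiC (nN%:~R * t x) = nN%:~R * psiC (t x).
  have [_ _ hpM] := hp.
  rewrite hpM ?(psi_int hp) //; first exact: intg_int.
  exact: intg_gal.
have C : psiC x = (map_poly (intr : int -> k) Hx).[w] / nN%:~R.
  by apply: psiCE => //; rewrite -nNE.
apply: (mulfI nN0); rewrite -B -es A frob_horner C.
rewrite exprMn exprVn -[(nN%:~R : k) ^+ p](pFrobenius_autE pch) pFrobenius_aut_int.
by rewrite mulrCA mulfV // mulr1.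
Qed.

End Construct.
Lemma G_gt0 : (0 < d)%N.
Proof. by rewrite -cardG; apply/card_gt0P; exists 1%g; exact: group1. Qed.

Lemma frob_exists (p : nat) : prime p -> ~~ (p%:Z %| nN)%Z -> exists s : gal_of {:L}, is_frob p s.
Proof.
move=> pp hnN.
pose Fp := map_poly (intr : int -> 'F_p) F.
have Fp0 : Fp != 0 by apply: monic_neq0; apply: monic_map mF.
have [L' [rs hrs _]] := FinSplittingFieldFor Fp0.
pose k := FinFieldExtType L'.
have pchL : p \in [pchar L'] by rewrite pchar_lalg pchar_Fp.
have pch : p \in [pchar k] := pchL.
have eF : map_poly (in_alg L') Fp = map_poly (intr : int -> L') F.
  by rewrite -map_poly_comp; apply: eq_map_poly => n; exact: (rmorph_int (in_alg L')).
have sF : size (map_poly (intr : int -> L') F) = size F.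
  by apply: size_map_poly_id0; rewrite (monicP mF) rmorph1 oner_neq0.
have [w0 hw0] : exists w : L', (map_poly (intr : int -> L') F).[w] = 0.
  case: rs hrs => [|w0 rs] hrs.
    exfalso; move: (eqp_size hrs); rewrite big_nil size_poly1 eF sF sizeF.
    by move=> [] e; move: G_gt0; rewrite e.
  exists w0; apply/rootP; rewrite -eF (eqp_root hrs) root_prod_XsubC.
  exact: mem_head.
pose w : k := w0.
have Fw : (map_poly (intr : int -> k) F).[w] = 0 := hw0.
have nN0 : (nN%:~R : k) != 0.
  by apply/negP => /eqP /(int_dvd_pchar _ _ _ pch) h; move: hnN; rewrite h.
have [s hs] := psiC_frob _ _ _ pch Fw nN0.
have [h1 hD hM] := psiC_hom _ _ Fw nN0.
by exists s, k, (psiC k w); split.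
Qed.
Variable a : nat -> rat.
Hypothesis rec : forall n, a (n + d)%N = - \sum_(k < d) (F`_k)%:~R * a (n + k)%N.
Local Notation zz := (invmx VP *m \col_(i < #|G|) (a i)%:A).
Variable K : {set gal_of {:L}}.
Hypothesis hyp : forall tau, tau \in G ->
  \sum_(j < #|G|) zz j 0 * tau (((enum_val j)^-1)%g xi) = (tau \in K)%:R.

Definition Eden : int := \prod_(i < #|G|) denq (a i).
Definition Dint : int := nN * Eden.

Lemma Eden_a (i : 'I_#|G|) : exists m : int, Eden%:~R * a i = m%:~R.
Proof.
exists (numq (a i) * \prod_(j < #|G| | j != i) denq (a j)).
rewrite /Eden (bigD1 i) //= !intrM numqE; ring.
Qed.

Lemma Dint_neq0 : Dint != 0.
Proof.
rewrite /Dint mulf_neq0 //.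
  by apply/eqP => e; move: Nn_neq0; rewrite nNE e mulr0z eqxx.
by apply/prodf_neq0 => i _; apply: denq_neq0.
Qed.

Lemma Dz_intg j : alg_integral (Dint%:~R * zz j 0).
Proof.
have [w hw eN] := Nn_split.
rewrite !mxE /invmx VP_unit.
have e : Dint%:~R * \sum_k ((\det VP)^-1 *: \adj VP) j k * (\col_(i < #|G|) (a i)%:A) k 0
   = w * \sum_k \adj VP j k * (Eden%:~R * a k)%:A.
  rewrite /Dint intrM -nNE eN !mulr_sumr; apply: eq_bigr => k _.
  have eA : forall c : rat, (Eden%:~R * c)%:A = Eden%:~R * c%:A :> L.
    by move=> c; rewrite -!in_algE rmorphM rmorph_int.
  rewrite !mxE eA.
  field; exact: detP_neq0.
rewrite e; apply: intg_mul => //; apply: intg_sum => k _; apply: intg_mul.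
  by apply: adj_intg; apply: VP_intg.
have [m ->] := Eden_a k; rewrite -in_algE rmorph_int; exact: intg_int.
Qed.

Lemma ap_int (p : nat) : exists m : int, a p * Dint%:~R = m%:~R.
Proof.
apply: (@intg_rat L).
rewrite (_ : (a p * Dint%:~R)%:A = (a p)%:A * Dint%:~R); last first.
  by rewrite -!in_algE rmorphM rmorph_int.
rewrite (a_repr _ rec) mulrC mulr_sumr.
apply: intg_sum => j _; rewrite mulrA; apply: intg_mul; first exact: Dz_intg.
by apply: intg_exp; apply: rr_intg.
Qed.

Lemma frob_cong (p : nat) (s : gal_of {:L}) (m : int) :
  is_frob p s -> a p * Dint%:~R = m%:~R -> (p%:Z %| m - Dint * (s \in K)%:Z)%Z.
Proof.
move=> [k [psi [pch psi1 psiD psiM psiF]]] hm.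
have hp : psi_hom psi by split.
apply: (int_dvd_pchar _ _ _ pch).
have T1 : (m%:~R : L) = \sum_j (Dint%:~R * zz j 0) * rr j ^+ p.
  have -> : (m%:~R : L) = (a p)%:A * Dint%:~R.
    have -> : (m%:~R : L) = in_alg L (m%:~R) by rewrite rmorph_int.
    by rewrite -hm rmorphM rmorph_int.
  rewrite (a_repr _ rec) mulr_suml; apply: eq_bigr => j _; ring.
have T2 : ((Dint * (s \in K)%:Z)%:~R : L) = \sum_j (Dint%:~R * zz j 0) * s (rr j).
  rewrite intrM -[((s \in K)%:Z)%:~R]/((s \in K)%:R : L) -(hyp _ (memG _ s)) mulr_sumr.
  by apply: eq_bigr => j _; rewrite mulrA.
have e1 : psi (m%:~R) = \sum_j psi (Dint%:~R * zz j 0) * psi (rr j) ^+ p.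
  rewrite T1 (psi_sum hp); last first.
    by move=> j _; apply: intg_mul; [exact: Dz_intg | apply: intg_exp; exact: rr_intg].
  apply: eq_bigr => j _; rewrite psiM; [|exact: Dz_intg|apply: intg_exp; exact: rr_intg].
  by rewrite (psi_exp hp) //; exact: rr_intg.
have e2 : psi ((Dint * (s \in K)%:Z)%:~R) = \sum_j psi (Dint%:~R * zz j 0) * psi (rr j) ^+ p.
  rewrite T2 (psi_sum hp); last first.
    by move=> j _; apply: intg_mul; [exact: Dz_intg | apply: intg_gal; exact: rr_intg].
  apply: eq_bigr => j _; rewrite psiM; [|exact: Dz_intg|apply: intg_gal; exact: rr_intg].
  by rewrite psiF //; exact: rr_intg.
by rewrite rmorphB /= -(psi_int hp) -(psi_int hp (Dint * _)) e1 e2 subrr.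
Qed.
Hypothesis KG : K \in classes G.

Lemma main_sec : exists S : seq nat, forall p, prime p -> p \notin S ->
  p_integral p (a p) && rat_cong_mod p (a p) (frob_set L p == K)%:R.
Proof.
exists (iota 0 (`|Dint|%N).+1) => p pp.
rewrite mem_iota add0n ltnS /= => /negbTE hpD.
have hD : ~~ (p%:Z %| Dint)%Z.
  apply/negP; rewrite dvdzE /= => h.
  have := dvdn_leq _ h; rewrite absz_gt0 Dint_neq0 hpD => /(_ isT); done.
have hN : ~~ (p%:Z %| nN)%Z.
  by apply: contra hD => h; rewrite /Dint dvdz_mulr.
have [m hm] := ap_int p.
have [s0 hs0] := frob_exists _ pp hN.
apply: (@cong_final p (a p) m Dint _ pp hD hm).
have mem_fs t : (t \in frob_set L p) = `[< is_frob p t >] by rewrite inE.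
case: (boolP (s0 \in K)) => s0K.
  have -> : frob_set L p == K.
    apply/eqP/setP => t; rewrite mem_fs; apply/idP/idP.
      rewrite asboolE => ht; apply/negPn/negP => tK.
      have h1 := frob_cong _ _ _ ht hm; have h2 := frob_cong _ _ _ hs0 hm.
      rewrite s0K in h2; rewrite (negbTE tK) in h1.
      move: hD; rewrite (_ : Dint = (m - Dint * 0%:Z) - (m - Dint * 1%:Z)).
        by rewrite rpredB.
      by rewrite mulr0 mulr1 subr0 opprB addrC subrK.
    move=> tK; apply/asboolP.
    have [_ eK] := repr_classesP KG.
    have e2 : (s0 ^: G)%g = (repr K ^: G)%g by apply/class_eqP; rewrite -eK.
    move: tK; rewrite eK -e2 => /imsetP [g _ ->].
    exact: frob_conj.
  by have := frob_cong _ _ _ hs0 hm; rewrite s0K.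
have -> : (frob_set L p == K) = false.
  apply/negbTE/negP => /eqP e; move: s0K; rewrite -e mem_fs => /negP; apply.
  exact/asboolP.
by have := frob_cong _ _ _ hs0 hm; rewrite (negbTE s0K).
Qed.
End Main.
Theorem mainTheorem6 (L : splittingFieldType rat) (F : {poly int}) (xi : L)
  (a : nat -> rat) (K : {set gal_of {:L}}) :
  let d := (size F).-1 in
  let G := 'Gal({:L} / 1%VS)%g in
  F \is monic ->
  irreducible_poly F ->
  root (map_poly intr F) xi ->
  <<1%VS; xi>>%VS = fullv ->
  galois 1%VS {:L} ->
  \dim {:L} = d ->
  (forall n, a (n + d)%N = - \sum_(k < d) (F`_k)%:~R * a (n + k)%N) ->
  K \in classes G ->
  let P : 'M[L]_#|G| :=
    \matrix_(i < #|G|, j < #|G|) ((enum_val j)^-1)%g (xi ^+ i) in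
  let z : 'cV[L]_#|G| := invmx P *m \col_(i < #|G|) (a i)%:A in
  (forall tau, tau \in G ->
     \sum_(j < #|G|) z j 0 * tau (((enum_val j)^-1)%g xi)
       = (tau \in K)%:R) ->
  exists S : seq nat, forall p, prime p -> p \notin S ->
    p_integral p (a p) && rat_cong_mod p (a p) (frob_set L p == K)%:R.
Proof.
move=> d G mF irrF rootF genF galF dimF rec KG P z hyp.
have hyp' : forall tau, tau \in G ->
  \sum_(j < #|G|) (invmx (Vandermonde #|G| (\row_j rr L xi j)) *m
     \col_(i < #|G|) (a i)%:A) j 0 * tau (((enum_val j)^-1)%g xi) = (tau \in K)%:R.
  by move=> tau htau; rewrite -(P_vdm L xi); exact: hyp.
exact: (@main_sec L F xi mF rootF genF galF dimF a rec K hyp' KG).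
Qed.
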